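(* Let $A \in \mathrm{Sp}(n,1)$ be a hyperbolic element written as $A=i_1i_2$ with $i_1,i_2\in\mathrm{Sp}(n,1)$ and $i_1^2=i_2^2=-I$. Then each of $i_1$ and $i_2$ maps the set of the two boundary fixed points of $A$ to itself.
   Context: $\mathbb{H}^{n+1}$ is a right $\mathbb{H}$-vector space with Hermitian form $\langle \mathbf z,\mathbf w\rangle = \bar w_{n+1} z_1 + \sum_{i=2}^{n} \bar w_i z_i + \bar w_1 z_{n+1}$; $\mathrm{Sp}(n,1)$ is the group of quaternionic matrices preserving it, acting on the boundary of quaternionic hyperbolic space (the set of right quaternionic lines of nonzero null vectors). An element is hyperbolic if it has exactly two fixed points on this boundary. *)

(* Defs.v *)
From HB Require Import structures.
From mathcomp Require Import all_boot all_order all_algebra.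
From mathcomp Require Import ring.
From mathcomp Require Import reals.
Set Implicit Arguments. Unset Strict Implicit. Unset Printing Implicit Defensive.
Import Order.TTheory GRing.Theory Num.Theory.
Local Open Scope ring_scope.

Section Quaternions.
Variable R : realType.

(* q = qr + qi i + qj j + qk k *)
Record quat := Quat { qr : R; qi : R; qj : R; qk : R }.

Definition quat2tuple (q : quat) := (qr q, qi q, qj q, qk q).
Definition tuple2quat (t : R * R * R * R) :=
  let: (a, b, c, d) := t in Quat a b c d.
Lemma quat2tupleK : cancel quat2tuple tuple2quat. Proof. by case. Qed.
HB.instance Definition _ := Equality.copy quat (can_type quat2tupleK).
HB.instance Definition _ := Choice.copy quat (can_type quat2tupleK).

Definition qzero := Quat 0 0 0 0.
Definition qone := Quat 1 0 0 0.
Definition qadd (p q : quat) :=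
  Quat (qr p + qr q) (qi p + qi q) (qj p + qj q) (qk p + qk q).
Definition qopp (p : quat) := Quat (- qr p) (- qi p) (- qj p) (- qk p).
(* Hamilton product: i^2 = j^2 = k^2 = ijk = -1 *)
Definition qmul (p q : quat) :=
  Quat (qr p * qr q - qi p * qi q - qj p * qj q - qk p * qk q)
       (qr p * qi q + qi p * qr q + qj p * qk q - qk p * qj q)
       (qr p * qj q - qi p * qk q + qj p * qr q + qk p * qi q)
       (qr p * qk q + qi p * qj q - qj p * qi q + qk p * qr q).
Definition qconj (p : quat) := Quat (qr p) (- qi p) (- qj p) (- qk p).

Lemma quatP (p q : quat) :
  qr p = qr q -> qi p = qi q -> qj p = qj q -> qk p = qk q -> p = q.
Proof. by case: p q => [????] [????] /= -> -> -> ->. Qed.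

Lemma qaddA : associative qadd.
Proof. by move=> [????] [????] [????]; apply: quatP => /=; ring. Qed.
Lemma qaddC : commutative qadd.
Proof. by move=> [????] [????]; apply: quatP => /=; ring. Qed.
Lemma qadd0 : left_id qzero qadd.
Proof. by move=> [????]; apply: quatP => /=; ring. Qed.
Lemma qaddN : left_inverse qzero qopp qadd.
Proof. by move=> [????]; apply: quatP => /=; ring. Qed.

HB.instance Definition _ := GRing.isZmodule.Build quat qaddA qaddC qadd0 qaddN.

Lemma qmulA : associative qmul.
Proof. by move=> [????] [????] [????]; apply: quatP => /=; ring. Qed.
Lemma qmul1 : left_id qone qmul.
Proof. by move=> [????]; apply: quatP => /=; ring. Qed.
Lemma qmulr1 : right_id qone qmul.
Proof. by move=> [????]; apply: quatP => /=; ring. Qed.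
Lemma qmulDl : left_distributive qmul +%R.
Proof. by move=> [????] [????] [????]; apply: quatP => /=; ring. Qed.
Lemma qmulDr : right_distributive qmul +%R.
Proof. by move=> [????] [????] [????]; apply: quatP => /=; ring. Qed.
Lemma qone_neq0 : qone != 0.
Proof. by apply/eqP => /(congr1 qr) /= /eqP; rewrite oner_eq0. Qed.

HB.instance Definition _ :=
  GRing.Zmodule_isNzRing.Build quat qmulA qmul1 qmulr1 qmulDl qmulDr qone_neq0.

End Quaternions.

Section SpN1.
Variable R : realType.
Variable n : nat.
(* H^{n+1} is represented by column vectors 'cV[quat R]_(n.+1), with
   coordinates z_1, ..., z_{n+1} stored at indices 0, ..., n. *)
Local Notation vec := 'cV[quat R]_(n.+1).
Local Notation mat := 'M[quat R]_(n.+1).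

Definition hform (z w : vec) : quat R :=
  qconj (w ord_max 0) * z ord0 0
  + \sum_(i < n.+1 | (0 < (i : nat) < n)%N) qconj (w i 0) * z i 0
  + qconj (w ord0 0) * z ord_max 0.

Definition in_Spn1 (A : mat) : Prop :=
  forall z w : vec, hform (A *m z) (A *m w) = hform z w.

Definition rscale (z : vec) (l : quat R) : vec := \col_i (z i 0 * l).

(* nonzero null vectors: representatives of boundary points *)
Definition null_nonzero (z : vec) : Prop := z != 0 /\ hform z z = 0.

Definition same_line (z w : vec) : Prop :=
  exists l : quat R, l != 0 /\ w = rscale z l.

Definition fixes_bpoint (A : mat) (z : vec) : Prop :=
  null_nonzero z /\ exists l : quat R, l != 0 /\ A *m z = rscale z l.

Definition hyperbolic (A : mat) : Prop :=
  exists z1 z2 : vec,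
    [/\ fixes_bpoint A z1, fixes_bpoint A z2, ~ same_line z1 z2 &
        forall w : vec, fixes_bpoint A w -> same_line z1 w \/ same_line z2 w].

End SpN1.

(* Main.v *)
Require Import Defs.
From HB Require Import structures.
From mathcomp Require Import all_boot all_order all_algebra.
From mathcomp Require Import reals.
From mathcomp Require Import ring lra.
Import GRing.Theory Num.Theory.
Local Open Scope ring_scope.

Lemma quat_inv (R : realType) (l : quat R) : l != 0 ->
  exists m : quat R, m != 0 /\ l * m = 1.
Proof.
case: l => a b c d Hl.
set N := a * a + b * b + c * c + d * d.
have HN : N != 0.
  apply/eqP => HN0; move/eqP: Hl; apply.
  have ha : a = 0 by rewrite /N in HN0; nra.
  have hb : b = 0 by rewrite /N in HN0; nra.
  have hc : c = 0 by rewrite /N in HN0; nra.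
  have hd : d = 0 by rewrite /N in HN0; nra.
  by rewrite ha hb hc hd.
have E : Quat a b c d * Quat (a / N) (- b / N) (- c / N) (- d / N) = 1.
  apply: quatP => /=; rewrite /N in HN *; field; exact: HN.
exists (Quat (a / N) (- b / N) (- c / N) (- d / N)); split => //.
apply/eqP => H0; move: E; rewrite H0 mulr0 => /eqP; by rewrite eq_sym oner_eq0.
Qed.

Section S.
Variable R : realType.
Variable n : nat.

Lemma mul_rscale (p : nat) (M : 'M[quat R]_(p, n.+1)) z l :
  M *m rscale z l = (\col_i ((M *m z) i 0 * l)).
Proof.
apply/matrixP => i j; rewrite !mxE mulr_suml; apply: eq_bigr => k _.
by rewrite !mxE mulrA.
Qed.

Lemma rscale_rscale (z : 'cV[quat R]_(n.+1)) l m :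
  rscale (rscale z l) m = rscale z (l * m).
Proof. by apply/matrixP => i j; rewrite !mxE mulrA. Qed.

Lemma rscale1 (z : 'cV[quat R]_(n.+1)) : rscale z 1 = z.
Proof. by apply/matrixP => i j; rewrite !mxE mulr1 (ord1 j). Qed.
End S.

Theorem lemma2p3 (R : realType) (n : nat) (A i1 i2 : 'M[quat R]_(n.+1)) :
  (1 <= n)%N ->
  in_Spn1 A -> in_Spn1 i1 -> in_Spn1 i2 ->
  hyperbolic A ->
  A = i1 *m i2 ->
  i1 *m i1 = - 1%:M -> i2 *m i2 = - 1%:M ->
  (forall z : 'cV[quat R]_(n.+1),
      fixes_bpoint A z -> fixes_bpoint A (i1 *m z)) /\
  (forall z : 'cV[quat R]_(n.+1),
      fixes_bpoint A z -> fixes_bpoint A (i2 *m z)).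
Proof.
move=> _ _ S1 S2 _ HA H1 H2.
have rs : forall (M : 'M[quat R]_(n.+1)) z l,
    M *m rscale z l = rscale (M *m z) l.
  by move=> M z l; rewrite mul_rscale; apply/matrixP => i j; rewrite !mxE.
have key : forall z, fixes_bpoint A z -> exists m, m != 0 /\
    i2 *m (i1 *m z) = rscale z m.
  move=> z [_ [l [l0 Hz]]].
  have [m [m0 lm]] := @quat_inv R l l0.
  exists m; split => //.
  have : i2 *m (i1 *m (A *m z)) = z.
    rewrite HA !mulmxA.
    have -> : i2 *m i1 *m i1 = - i2 by rewrite -mulmxA H1 mulmxN mulmx1.
    by rewrite mulNmx H2 opprK mul1mx.
  rewrite Hz !rs => E.
  by rewrite -[LHS]rscale1 -lm -rscale_rscale E.
have nn : forall (M : 'M[quat R]_(n.+1)) z, in_Spn1 M -> M *m M = - 1%:M ->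
    null_nonzero z -> null_nonzero (M *m z).
  move=> M z SM HM [z0 hz]; split; last by rewrite SM.
  apply/eqP => E; move/eqP: z0; apply.
  have : M *m (M *m z) = 0 by rewrite E mulmx0.
  by rewrite mulmxA HM mulNmx mul1mx => /eqP; rewrite oppr_eq0 => /eqP.
split => z Hz; have [m [m0 Hm]] := key z Hz; have [nz _] := Hz.
- split; first exact: nn.
  exists m; split => //.
  by rewrite HA -mulmxA Hm rs.
- split; first exact: nn.
  exists m; split => //.
  rewrite -rs -Hm HA !mulmxA H2 -(mulmxA i1) H2.
  by rewrite mulmxN mulmx1 !mulNmx mul1mx.
Qed.
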